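(* Let $\mathcal{D}=(X,\mathcal{G},\mathcal{B})$ be an $\mathrm{STD}_\lambda[k;g]$, so that $v=\lambda g^2$ and $k=\lambda g$, where $\lambda\ge1$, $g\ge2$ and $(\lambda,g)\notin\{(1,2),(1,3),(2,2)\}$, and let $\Gamma_\mathcal{D}$ be its incidence graph. Then there exists a split resolving set for $\Gamma_\mathcal{D}$ of size $2\cdot\left\lceil\frac{v\log v}{k-\lambda}\right\rceil$.
   Context: A transversal design $\mathrm{TD}_\lambda[k;g]$ ($g\ge2$) is a triple $(X,\mathcal{G},\mathcal{B})$ where $X$ is a set of $kg$ points, $\mathcal{G}$ is a partition of $X$ into $k$ point classes of size $g$, and $\mathcal{B}$ is a family of $k$-subsets of $X$ (blocks) such that each block contains exactly one point of each point class and any two points from distinct point classes lie in exactly $\lambda$ blocks. It is symmetric (an $\mathrm{STD}_\lambda[k;g]$) if its dual (interchanging points and blocks) is also a $\mathrm{TD}_\lambda[k;g]$; then $k=\lambda g$ and $|X|=|\mathcal{B}|=\lambda g^2$. The incidence graph $\Gamma_\mathcal{D}$ is the bipartite graph on $X\cup\mathcal{B}$ with $x$ adjacent to $B$ iff $x\in B$. For a bipartite graph with bipartition $X\cup Y$, a split resolving set is a set $S=S_X\cup S_Y$ with $S_X\subseteq X$, $S_Y\subseteq Y$, such that any two distinct vertices of $X$ are at different distances from some vertex of $S_Y$, and any two distinct vertices of $Y$ are at different distances from some vertex of $S_X$. $\log$ is the natural logarithm. *)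

(* Defs.v *)
From mathcomp Require Import all_boot all_order all_algebra.
Set Implicit Arguments. Unset Strict Implicit. Unset Printing Implicit Defensive.
Import Order.TTheory GRing.Theory Num.Theory.

(* ---------- Transversal designs ----------
   Points form a finite type P, blocks a finite type B (blocks are indexed,
   so a "family" of blocks may contain repeated sets), and incidence is
   given by inc : P -> B -> bool. *)
Definition blk (P B : finType) (inc : P -> B -> bool) (b : B) : {set P} :=
  [set x | inc x b].

Definition is_TD (P B : finType) (inc : P -> B -> bool) (lam k g : nat) : Prop :=
  2 <= g /\
  exists G : {set {set P}},
    [/\ partition G [set: P], #|G| = k,
        (forall C, C \in G -> #|C| = g),
        (forall b, #|blk inc b| = k) &
        (forall b C, C \in G -> #|C :&: blk inc b| = 1)] /\
    (forall x y, pblock G x != pblock G y ->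
           #|[set b | inc x b && inc y b]| = lam).


Definition dual_inc (P B : finType) (inc : P -> B -> bool) : B -> P -> bool :=
  fun b x => inc x b.

Definition is_STD (P B : finType) (inc : P -> B -> bool) (lam k g : nat) : Prop :=
  is_TD inc lam k g /\ is_TD (dual_inc inc) lam k g.

Definition inc_graph (P B : finType) (inc : P -> B -> bool) : rel (P + B) :=
  fun u w => match u, w with
             | inl x, inr b => inc x b
             | inr b, inl x => inc x b
             | _, _ => false
             end.

Fixpoint ball (T : finType) (e : rel T) (n : nat) (u : T) : {set T} :=
  match n with
  | 0 => [set u]
  | n'.+1 => ball e n' u :|: [set w | [exists z in ball e n' u, e z w]]
  end.

(* Graph distance: Some d for the least d with w in the d-ball of u,
   None (infinite distance) if w is not reachable from u. Distances in a
   finite graph are always < #|T|. *)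
Definition gdist (T : finType) (e : rel T) (u w : T) : option nat :=
  match [seq n <- iota 0 #|T| | w \in ball e n u] with
  | n :: _ => Some n
  | [::] => None
  end.

Definition split_resolving (P B : finType) (e : rel (P + B))
    (SX : {set P}) (SY : {set B}) : Prop :=
  (forall x x' : P, x != x' ->
     exists2 s, s \in SY & gdist e (inr s) (inl x) != gdist e (inr s) (inl x')) /\
  (forall b b' : B, b != b' ->
     exists2 s, s \in SX & gdist e (inl s) (inr b) != gdist e (inl s) (inr b')).

(* Main.v *)
Require Import Defs.
From mathcomp Require Import all_boot all_order all_algebra.
From mathcomp Require Import all_classical all_reals all_analysis.
From mathcomp Require Import zify ring lra.
Set Implicit Arguments. Unset Strict Implicit. Unset Printing Implicit Defensive.
Import Order.TTheory GRing.Theory Num.Theory.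
Lemma ffact_ratio (a v N : nat) : a <= v -> a ^_ N * v ^ N <= v ^_ N * a ^ N.
Proof.
move=> hav; elim: N => [|N IH]; first by rewrite !ffactn0 !expn0.
rewrite !ffactnSr !expnS.
have h : (a - N) * v <= (v - N) * a by nia.
have := leq_mul IH h.
by rewrite [X in X <= _]mulnACA [X in _ <= X]mulnACA [v * _]mulnC [a * _]mulnC.

Qed.

Lemma bin_ratio (a v N : nat) : a <= v -> 'C(a, N) * v ^ N <= 'C(v, N) * a ^ N.
Proof.
move=> hav; have := ffact_ratio N hav; rewrite -!bin_ffact => h.
rewrite -(leq_pmul2r (fact_gt0 N)); move: h.
by rewrite mulnAC [X in _ <= X]mulnAC.

Qed.

Lemma card_bigcup_le (T I : finType) (A : {pred I}) (F : I -> {set T}) :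
  #|\bigcup_(i in A) F i| <= \sum_(i in A) #|F i|.
Proof.
elim/big_rec2: _ => [|i S n _ IH]; first by rewrite cards0.
by apply: leq_trans (leq_card_setU _ _) _; rewrite leq_add2l.

Qed.

Lemma hitting (T I : finType) (A : {set I}) (D : I -> {set T}) (N d : nat) :
  (forall i, i \in A -> d <= #|D i|) ->
  #|A| * 'C(#|T| - d, N) < 'C(#|T|, N) ->
  exists S : {set T}, #|S| = N /\ forall i, i \in A -> exists2 u, u \in S & u \in D i.
Proof.
move=> hd hlt.
pose Bad i := [set S : {set T} | S \subset ~: D i & #|S| == N].
have hB i : i \in A -> #|Bad i| <= 'C(#|T| - d, N).
  move=> iA; rewrite cards_draws; apply: leq_bin2l.
  by rewrite cardsCs finset.setCK; have := hd i iA; lia.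
have hU : #|\bigcup_(i in A) Bad i| < #|[set S : {set T} | #|S| == N]|.
  rewrite card_draws; apply: leq_ltn_trans hlt.
  apply: leq_trans (card_bigcup_le _ _) _.
  rewrite -sum_nat_const; exact: leq_sum.
have [S] : exists S, S \in [set S : {set T} | #|S| == N] :\: \bigcup_(i in A) Bad i.
  apply/set0Pn; rewrite -card_gt0 cardsD.
  have := subset_leq_card (subsetIr [set S : {set T} | #|S| == N] (\bigcup_(i in A) Bad i)).
  lia.
rewrite !inE => /andP[hnot /eqP hS]; exists S; split=> // i iA.
case: (boolP [exists u, (u \in S) && (u \in D i)]) => [/existsP [u /andP[]] | hno].
  by move=> ? ?; exists u.
exfalso; move/bigcupP: hnot; apply; exists i => //.
rewrite inE hS eqxx andbT; apply/fintype.subsetP => u uS; rewrite inE.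
apply/negP => uD; move/negP: hno; apply; apply/existsP; exists u; by rewrite uS uD.

Qed.

Lemma count_ok (v d N m : nat) : 0 < v -> d <= v -> N <= v -> m < v ^ 2 ->
  v ^ 2 * (v - d) ^ N <= v ^ N -> m * 'C(v - d, N) < 'C(v, N).
Proof.
move=> v0 dv Nv mv h.
have hb := bin_ratio N (leq_subr d v).
have h2 : v ^ 2 * 'C(v - d, N) <= 'C(v, N).
  have vN : 0 < v ^ N by rewrite expn_gt0 v0.
  rewrite -(leq_pmul2r vN) [X in _ <= X]mulnC -mulnA.
  apply: leq_trans (leq_mul (leqnn (v ^ 2)) hb) _.
  rewrite mulnCA [X in _ <= X]mulnC; exact: leq_mul.
case: (posnP 'C(v - d, N)) => [->|cp]; first by rewrite muln0 bin_gt0.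
by apply: leq_trans h2; rewrite ltn_pmul2r.
Qed.

Lemma side (T U : finType) (f : T -> U -> bool) (k lam N : nat) :
  (forall t, #|[set u | f t u]| = k) ->
  (forall t t', t != t' -> #|[set u | f t u && f t' u]| <= lam) ->
  N <= #|U| -> 0 < #|U| -> 2 * (k - lam) <= #|U| -> #|T| = #|U| ->
  #|U| ^ 2 * (#|U| - 2 * (k - lam)) ^ N <= #|U| ^ N ->
  exists S : {set U}, #|S| = N /\
    forall t t', t != t' -> exists2 u, u \in S & f t u != f t' u.
Proof.
move=> hk hl hN hU0 hd hTU hnum.
pose A := [set p : T * T | p.1 != p.2].
pose D (p : T * T) := [set u | f p.1 u != f p.2 u].
have hD : forall p, p \in A -> 2 * (k - lam) <= #|D p|.
  case=> t t'; rewrite inE /= => tt'.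
  pose X := [set u | f t u]; pose Y := [set u | f t' u].
  have eD : D (t, t') = (X :\: Y) :|: (Y :\: X).
    by apply/setP => u; rewrite !inE /=; case: (f t u); case: (f t' u).
  have e0 : (X :\: Y) :&: (Y :\: X) = finset.set0.
    by apply/setP => u; rewrite !inE /=; case: (f t u); case: (f t' u).
  have eI : X :&: Y = [set u | f t u && f t' u] by apply/setP => u; rewrite !inE.
  have eI' : Y :&: X = [set u | f t u && f t' u] by rewrite finset.setIC.
  rewrite eD cardsU e0 cards0 subn0 !cardsD eI eI' !hk.
  have := hl _ _ tt'; lia.
have [t0 _] : exists t : T, t \in [set: T] by apply/set0Pn; rewrite -card_gt0 cardsT hTU.
have hA : #|A| < #|U| ^ 2.
  rewrite -hTU expnS expn1 -card_prod -cardsT; apply: proper_card.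
  rewrite properT; apply/negP => /eqP eA.
  have : (t0, t0) \in A by rewrite eA inE.
  by rewrite inE /= eqxx.
have := hitting hD (count_ok hU0 hd hN hA hnum).
move=> [S [hS hit]]; exists S; split=> // t t' tt'.
have [|u uS] := hit (t, t'); first by rewrite inE.
by rewrite inE /= => ?; exists u.
Qed.
Lemma gdist_some (T : finType) (e : rel T) u w n :
  gdist e u w = Some n -> w \in Defs.ball e n u.
Proof.
rewrite /gdist; case E: [seq _ <- _ | _] => [|m s] // [<-].
have : m \in [seq n <- iota 0 #|T| | w \in Defs.ball e n u] by rewrite E mem_head.
by rewrite mem_filter => /andP[].
Qed.

Lemma ball1 (T : finType) (e : rel T) u w : w \in Defs.ball e 1 u -> w = u \/ e u w.
Proof.
rewrite /= !inE => /orP[/eqP ->|/existsP [z /andP[]]]; first by left.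
by rewrite inE => /eqP ->; right.
Qed.

Lemma gdist_one (T : finType) (e : rel T) u w :
  u != w -> e u w -> gdist e u w = Some 1.
Proof.
move=> uw euw.
have h2 : 2 <= #|T|.
  have := max_card [set u; w]; rewrite cards2 uw; done.
rewrite /gdist.
have -> : iota 0 #|T| = 0 :: 1 :: iota 2 (#|T| - 2).
  by rewrite -{1}[#|T|](subnKC h2).
rewrite /= !inE eq_sym (negbTE uw) /=.
have -> : [exists z in [set u], e z w].
  by apply/existsP; exists u; rewrite inE eqxx euw.
by [].
Qed.

Lemma resolve_pt (P B : finType) (inc : P -> B -> bool) (s : B) (x x' : P) :
  inc x s != inc x' s ->
  gdist (inc_graph inc) (inr s) (inl x) != gdist (inc_graph inc) (inr s) (inl x').
Proof.
wlog hx : x x' / inc x s.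
  move=> W h; case hx: (inc x s); first exact: W.
  rewrite eq_sym; apply: W; first by move: h; rewrite hx; case: (inc x' s).
  by rewrite eq_sym.
rewrite hx; case hx': (inc x' s) => // _.
rewrite (@gdist_one _ _ (inr s) (inl x)) //.
apply/eqP => /esym /gdist_some /ball1 [//|/=]; by rewrite hx'.
Qed.

Lemma resolve_bl (P B : finType) (inc : P -> B -> bool) (s : P) (b b' : B) :
  inc s b != inc s b' ->
  gdist (inc_graph inc) (inl s) (inr b) != gdist (inc_graph inc) (inl s) (inr b').
Proof.
wlog hx : b b' / inc s b.
  move=> W h; case hx: (inc s b); first exact: W.
  rewrite eq_sym; apply: W; first by move: h; rewrite hx; case: (inc s b').
  by rewrite eq_sym.
rewrite hx; case hx': (inc s b') => // _.
rewrite (@gdist_one _ _ (inl s) (inr b)) //.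
apply/eqP => /esym /gdist_some /ball1 [//|/=]; by rewrite hx'.
Qed.

Lemma TD_deg (P B : finType) (inc : P -> B -> bool) lam k g b :
  is_TD inc lam k g -> #|blk inc b| = k.
Proof. by case=> _ [G [[_ _ _ hb _] _]]. Qed.

Lemma TD_card (P B : finType) (inc : P -> B -> bool) lam k g :
  is_TD inc lam k g -> #|P| = k * g.
Proof.
case=> _ [G [[hp hG hC _ _] _]].
rewrite -cardsT (card_partition hp) (eq_bigr (fun _ => g)) ?sum_nat_const ?hG //.
Qed.

Lemma TD_common (P B : finType) (inc : P -> B -> bool) lam k g x x' :
  is_TD inc lam k g -> x != x' -> #|[set b | inc x b && inc x' b]| <= lam.
Proof.
case=> _ [G [[hp hG hC hb hI] hl]] xx'.
case: (boolP (finset.pblock G x != finset.pblock G x')) => [h|]; first by rewrite hl.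
rewrite negbK => /eqP e.
have cov : forall y, y \in finset.cover G by move=> y; move/andP: hp => [/eqP -> _]; rewrite inE.
have CG : finset.pblock G x \in G by rewrite finset.pblock_mem.
have xC : x \in finset.pblock G x by rewrite finset.mem_pblock.
have x'C : x' \in finset.pblock G x by rewrite e finset.mem_pblock.
suff -> : [set b | inc x b && inc x' b] = finset.set0 by rewrite cards0.
apply/setP => b; rewrite !inE; apply/negP => /andP[ixb ix'b].
have := hI b _ CG; move/eqP/cards1P => [y ey].
have : x \in finset.pblock G x :&: blk inc b by rewrite inE xC inE ixb.
have : x' \in finset.pblock G x :&: blk inc b by rewrite inE x'C inE ix'b.
rewrite ey !inE => /eqP e1 /eqP e2; move: xx'; by rewrite e1 e2 eqxx.
Qed.
Lemma lam_ind (l0 g : nat) : (1 <= l0)%N -> (2 <= g)%N ->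
  (l0 * g ^ 2 <= 2 ^ (l0 * (g - 1)))%N ->
  forall l, (l0 <= l)%N -> (l * g ^ 2 <= 2 ^ (l * (g - 1)))%N.
Proof.
move=> l01 g2 hb; elim=> [|l IH]; first by rewrite leqn0 => /eqP h; rewrite h in l01.
rewrite leq_eqVlt => /orP[/eqP <- //|]; rewrite ltnS => hl.
have h := IH hl.
have l1 : (1 <= l)%N by apply: leq_trans l01 hl.
have -> : (l.+1 * (g - 1) = (g - 1) + l * (g - 1))%N by lia.
have -> : (l.+1 * g ^ 2 = g ^ 2 + l * g ^ 2)%N by lia.
rewrite expnD.
have h1 : (2 <= 2 ^ (g - 1))%N.
  by rewrite -{1}(expn1 2) leq_exp2l //; lia.
have := leq_mul h1 h.
have : (g ^ 2 <= l * g ^ 2)%N by rewrite leq_pmull.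
lia.
Qed.

Lemma g_ind g : (7 <= g)%N -> (g ^ 2 <= 2 ^ (g - 1))%N.
Proof.
elim: g => // g IH; rewrite leq_eqVlt => /orP[/eqP <- //|]; rewrite ltnS => hg.
have h := IH hg.
have -> : (g.+1 - 1 = (g - 1).+1)%N by lia.
have : (g.+1 ^ 2 <= 2 * g ^ 2)%N by rewrite !expnS !expn0 !muln1; nia.

move: h; rewrite (expnS 2 (g - 1)); set a := 2 ^ (g - 1); set b := g ^ 2; set c := g.+1 ^ 2.
lia.
Qed.

Lemma pow_bound (l g : nat) : (1 <= l)%N -> (2 <= g)%N ->
  ~ (l = 1 /\ g = 2)%N -> ~ (l = 1 /\ g = 3)%N -> ~ (l = 2 /\ g = 2)%N ->
  ~ (l = 1 /\ g = 4)%N -> ~ (l = 1 /\ g = 5)%N -> ~ (l = 1 /\ g = 6)%N ->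
  ~ (l = 2 /\ g = 3)%N -> ~ (l = 3 /\ g = 2)%N ->
  (l * g ^ 2 <= 2 ^ (l * (g - 1)))%N.
Proof.
move=> l1 g2 n1 n2 n3 n4 n5 n6 n7 n8.
have [g7|g7] := leqP 7 g.
  apply: (lam_ind (l0 := 1)) => //; rewrite !mul1n; exact: g_ind.
have : (g = 2 \/ g = 3 \/ g = 4 \/ g = 5 \/ g = 6)%N by lia.
case=> [?|[?|[?|[?|?]]]]; subst g.
- apply: (lam_ind (l0 := 4)) => //; lia.
- apply: (lam_ind (l0 := 3)) => //; lia.
- apply: (lam_ind (l0 := 2)) => //; lia.
- apply: (lam_ind (l0 := 2)) => //; lia.
- apply: (lam_ind (l0 := 2)) => //; lia.
Qed.

Local Open Scope ring_scope.

Lemma e_ge2 (R : realType) : 2 <= expR (1 : R).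
Proof. by have := expR_ge1Dx (1 : R). Qed.

Lemma e3_ge16 (R : realType) : 16 <= expR (1 : R) ^+ 3.
Proof.
have e1 : expR (1 : R) ^+ 3 = expR (3/4) ^+ 4.
  by rewrite -!expRM_natr; congr expR; lra.
have e2 : expR (3/4 : R) = expR (3/32) ^+ 8.
  by rewrite -!expRM_natr; congr expR; lra.
have a1 : 35/32 <= expR (3/32 : R) by have := expR_ge1Dx (3/32 : R); lra.
set a := expR (3/32 : R) in a1 e2.
have a2 : (299/250) <= a ^+ 2 by rewrite expr2; nra.
have a4 : (143/100) <= a ^+ 4 by rewrite (_ : a ^+ 4 = a ^+ 2 * a ^+ 2) -?exprD //; nra.
have a8 : (51/25) <= a ^+ 8 by rewrite (_ : a ^+ 8 = a ^+ 4 * a ^+ 4) -?exprD //; nra.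
have b4 : expR (3/4 : R) ^+ 4 = expR (3/4 : R) ^+ 2 * expR (3/4 : R) ^+ 2 by rewrite -exprD.
rewrite e1 b4 !expr2 e2.
have c2 : 4 <= a ^+ 8 * a ^+ 8 by nra.
nra.
Qed.

Lemma ln_bound (R : realType) (l g : nat) : (1 <= l)%N -> (2 <= g)%N ->
  ~ (l = 1 /\ g = 2)%N -> ~ (l = 1 /\ g = 3)%N -> ~ (l = 2 /\ g = 2)%N ->
  ln ((l * g ^ 2)%:R : R) <= (l * (g - 1))%:R.
Proof.
move=> l1 g2 n1 n2 n3.
have pos : 0 < (l * g ^ 2)%:R :> R by rewrite ltr0n muln_gt0 expn_gt0; lia.
rewrite -ler_expR lnK ?posrE // -[X in expR X]mul1r expRM_natr.
have E2 := e_ge2 R; have E3 := e3_ge16 R.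
set E := expR (1 : R) in E2 E3 *.
have E4 : E ^+ 4 = E ^+ 3 * E by rewrite exprSr.
have E5 : E ^+ 5 = E ^+ 3 * E * E by rewrite !exprSr.
case S: [|| (l == 1) && (g == 4), (l == 1) && (g == 5), (l == 1) && (g == 6),
   (l == 2) && (g == 3) | (l == 3) && (g == 2)]%N.
  move: S => /orP [/andP [/eqP -> /eqP ->]|/orP [/andP [/eqP -> /eqP ->]|/orP [/andP [/eqP -> /eqP ->]|/orP [/andP [/eqP -> /eqP ->]|/andP [/eqP -> /eqP ->]]]]].
  - by rewrite (_ : (1 * 4 ^ 2)%N = 16%N) // (_ : (1 * (4 - 1))%N = 3%N).
  - rewrite (_ : (1 * 5 ^ 2)%N = 25%N) // (_ : (1 * (5 - 1))%N = 4%N) // E4; nra.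
  - rewrite (_ : (1 * 6 ^ 2)%N = 36%N) // (_ : (1 * (6 - 1))%N = 5%N) // E5; nra.
  - rewrite (_ : (2 * 3 ^ 2)%N = 18%N) // (_ : (2 * (3 - 1))%N = 4%N) // E4; nra.
  - rewrite (_ : (3 * 2 ^ 2)%N = 12%N) // (_ : (3 * (2 - 1))%N = 3%N) //; lra.
have hb : (l * g ^ 2 <= 2 ^ (l * (g - 1)))%N.
  apply: pow_bound => //; move=> [el eg]; move: S; by rewrite el eg.
apply: le_trans (_ : (2 ^ (l * (g - 1)))%:R <= _).
  by rewrite ler_nat.
rewrite natrX; apply: lerXn2r => //; rewrite ?nnegrE //; lra.
Qed.

Lemma real_key (R : realType) (V Dk : R) (N : nat) : 1 < V -> 0 < Dk ->
  2 * Dk <= V -> V * ln V / Dk <= N%:R ->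
  V ^+ 2 * (V - 2 * Dk) ^+ N <= V ^+ N.
Proof.
move=> V1 D0 DV hN.
have V0 : 0 < V by lra.
rewrite ler_pdivrMr // in hN.
set q := 1 - 2 * Dk / V.
have hq0 : 0 <= q.
  rewrite /q subr_ge0 ler_pdivrMr // mul1r //.
have hqe : q <= expR (- (2 * Dk / V)) by have := expR_ge1Dx (- (2 * Dk / V)); rewrite /q; lra.
have hqN : q ^+ N <= expR (- (2 * Dk / V) * N%:R).
  rewrite expRM_natr; apply: lerXn2r => //; rewrite nnegrE // ltW // expR_gt0.
have hex : expR (- (2 * Dk / V) * N%:R) <= V ^-2.
  have -> : V ^-2 = expR (- (2%:R * ln V)).
    by rewrite expRN expRM_natl lnK // posrE.
  rewrite ler_expR mulNr lerN2.
  have -> : 2 * Dk / V * N%:R = 2 * (Dk * N%:R) / V by ring.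
  rewrite ler_pdivlMr //. 
  have : ln V * V <= Dk * N%:R by lra.
  nra.
have eq1 : V - 2 * Dk = V * q by rewrite /q mulrBr mulr1 mulrCA divff ?mulr1 // gt_eqF.
rewrite eq1 exprMn mulrA.
have : q ^+ N <= V ^-2 by apply: le_trans hex.
move=> hq.
have VN : 0 < V ^+ N by rewrite exprn_gt0.
have V2 : 0 < V ^+ 2 by rewrite exprn_gt0.
have fin : V ^+ 2 * V ^+ N * V ^-2 = V ^+ N by rewrite mulrAC divff ?mul1r // gt_eqF.
rewrite -[X in _ <= X]fin.
by rewrite ler_wpM2l // ltW // mulr_gt0.
Qed.

Theorem corollary3p4 (R : realType) (P B : finType) (inc : P -> B -> bool)
    (lam g : nat) :
  (1 <= lam)%N -> (2 <= g)%N ->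
  ~ ((lam == 1%N) && (g == 2%N)) -> ~ ((lam == 1%N) && (g == 3%N)) ->
  ~ ((lam == 2%N) && (g == 2%N)) ->
  is_STD inc lam (lam * g) g ->
  let v : R := (lam * g ^ 2)%:R in
  let k : R := (lam * g)%:R in
  exists SX : {set P}, exists SY : {set B},
    split_resolving (inc_graph inc) SX SY /\
    ((#|SX| + #|SY|)%:Z = 2 * Num.ceil (v * ln v / (k - lam%:R)))%R.
Proof.
move=> l1 g2 n1 n2 n3 [TD TDd] /=.
set vn := (lam * g ^ 2)%N.
have cP : #|P| = vn by rewrite (TD_card TD) -mulnA mulnn.
have cB : #|B| = vn by rewrite (TD_card TDd) -mulnA mulnn.
have m1 : ~ (lam = 1 /\ g = 2)%N by move=> [e1 e2]; apply: n1; rewrite e1 e2.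
have m2 : ~ (lam = 1 /\ g = 3)%N by move=> [e1 e2]; apply: n2; rewrite e1 e2.
have m3 : ~ (lam = 2 /\ g = 2)%N by move=> [e1 e2]; apply: n3; rewrite e1 e2.
have hln := ln_bound R l1 g2 m1 m2 m3.
set dn := (lam * g - lam)%N.
have edn : (lam * (g - 1))%N = dn by rewrite /dn mulnBr muln1.
rewrite edn in hln.
have ek : (lam * g)%:R - lam%:R = dn%:R :> R by rewrite natrB // leq_pmulr; lia.
rewrite ek.
have vn4 : (4 <= vn)%N.
  rewrite /vn; have : (4 <= g ^ 2)%N by rewrite (@leq_sqr 2 g).
  nia.
have dn0 : (0 < dn)%N by rewrite /dn; nia.
have dnv : (2 * dn <= vn)%N by rewrite /dn /vn; rewrite expnS expn1; nia.
set V := (vn%:R : R).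
set Dk := (dn%:R : R).
have V1 : 1 < V by rewrite /V ltr1n; lia.
have D0 : 0 < Dk by rewrite /Dk ltr0n.
set x := V * ln V / Dk.
have x0 : 0 <= x by rewrite /x divr_ge0 ?mulr_ge0 ?ln_ge0 ?ltW //; lra.
have xV : x <= V.
  rewrite /x ler_pdivrMr // ler_wpM2l //; lra.
have c0 : (0 <= Num.ceil x)%R by rewrite ceil_ge0; lra.
set N := `|Num.ceil x|%N.
have eN : (N%:Z = Num.ceil x)%R by rewrite /N abszE ger0_norm.
have xN : x <= N%:R by have := ceil_ge x; rewrite -eN.
have Nv : (N <= vn)%N.
  have : (Num.ceil x <= vn%:Z)%R by rewrite ceil_le_int.
  by rewrite -eN lez_nat.
have hnum : (vn ^ 2 * (vn - 2 * dn) ^ N <= vn ^ N)%N.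
  rewrite -(ler_nat R) natrM !natrX natrB // natrM.
  have dR : 2 * Dk <= V by rewrite /Dk /V -natrM ler_nat.
  exact: real_key V1 D0 dR xN.
have [SY [hSY hY]] := @side P B inc (lam * g) lam N (fun t => TD_deg t TDd)
  (fun t t' => TD_common TD) ltac:(by rewrite cB) ltac:(by rewrite cB; lia)
  ltac:(by rewrite cB) ltac:(by rewrite cP cB) ltac:(by rewrite cB).
have [SX [hSX hX]] := @side B P (dual_inc inc) (lam * g) lam N (fun t => TD_deg t TD)
  (fun t t' => TD_common TDd) ltac:(by rewrite cP) ltac:(by rewrite cP; lia)
  ltac:(by rewrite cP) ltac:(by rewrite cP cB) ltac:(by rewrite cP).
exists SX, SY; split.
  split.
    move=> y y' yy'; have [u uS hu] := hY y y' yy'.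
    by exists u => //; apply: resolve_pt.
  move=> b b' bb'; have [u uS hu] := hX b b' bb'.
  by exists u => //; apply: resolve_bl.
rewrite hSX hSY -eN; lia.
Qed.
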